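(* Let $X$ be a set of pointed Kripke models, $\Lambda$ a normal modal logic sound with respect to $X$ which is compact, and $D\subseteq\boldsymbol{\mathcal{L}}_{\Lambda}$ a descriptor such that $X$ is saturated with respect to $D$. Then the space $(X_D,\mathcal{T}_D)$ is compact.
   Context: Signature: countable non-empty sets $\Phi$, $\mathcal{I}$; $\mathcal{L}$: $\varphi ::= \top\mid p\mid\neg\varphi\mid\varphi\wedge\varphi\mid\Box_i\varphi$ on pointed Kripke models, standard semantics. $\boldsymbol{\varphi}$: formulas $\Lambda$-provably equivalent to $\varphi$; $\boldsymbol{\mathcal{L}}_{\Lambda}=\{\boldsymbol{\varphi}\}$. $\Lambda$ is compact if a set $A\subseteq\mathcal{L}$ is $\Lambda$-consistent iff every finite subset of $A$ is. A descriptor is $D\subseteq\boldsymbol{\mathcal{L}}_{\Lambda}$; $\boldsymbol{x}_D=\{y\in X:\forall\boldsymbol{\varphi}\in D,\ y\models\varphi\iff x\models\varphi\}$, $X_D=\{\boldsymbol{x}_D:x\in X\}$. $\mathcal{T}_D$ is the topology on $X_D$ generated by the subbasis $\{\boldsymbol{x}:x\models\varphi\}$, $\{\boldsymbol{x}:x\models\neg\varphi\}$, $\boldsymbol{\varphi}\in D$. $X$ is saturated with respect to $D$ if for all $Y,Y'\subseteq D$ such that $B=\{\varphi:\boldsymbol{\varphi}\in Y\}\cup\{\neg\varphi:\boldsymbol{\varphi}\in Y'\}$ is $\Lambda$-consistent, there is $x\in X$ with $x\models\psi$ for all $\psi\in B$. *)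

(* Defs.v *)
From Stdlib Require Import List.
Import ListNotations.




Definition countable (T : Type) : Prop :=
  exists f : T -> nat, forall x y, f x = f y -> x = y.

Inductive form (P I : Type) : Type :=
| Top : form P I
| Var : P -> form P I
| Neg : form P I -> form P I
| And : form P I -> form P I -> form P I
| Box : I -> form P I -> form P I.

Arguments Top {P I}.
Arguments Var {P I}.
Arguments Neg {P I}.
Arguments And {P I}.
Arguments Box {P I}.

Section Lang.
Variables P I : Type.
Local Notation form := (form P I).

Definition Imp (a b : form) : form := Neg (And a (Neg b)).
Definition Iff (a b : form) : form := And (Imp a b) (Imp b a).

Fixpoint conj_list (l : list form) : form :=
  match l with
  | [] => Top
  | a :: l' => And a (conj_list l')
  end.

Record kmodel : Type := KModel {
  world : Type;
  rel : I -> world -> world -> Prop;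
  val : P -> world -> Prop
}.

Record pointed : Type := Pointed {
  pmodel : kmodel;
  pworld : world pmodel
}.

Fixpoint sat (M : kmodel) (w : world M) (f : form) : Prop :=
  match f with
  | Top => True
  | Var p => val M p w
  | Neg g => ~ sat M w g
  | And g h => sat M w g /\ sat M w h
  | Box i g => forall v, rel M i w v -> sat M v g
  end.

Definition psat (x : pointed) (f : form) : Prop := sat (pmodel x) (pworld x) f.

(** Propositional tautologies: true under every Boolean valuation that
    treats propositional variables and boxed formulas as atoms
    (i.e. substitution instances of classical tautologies). *)
Fixpoint peval (v : form -> bool) (f : form) : bool :=
  match f with
  | Top => true
  | Var p => v (Var p)
  | Neg g => negb (peval v g)
  | And g h => andb (peval v g) (peval v h)
  | Box i g => v (Box i g)
  end.

Definition tautology (f : form) : Prop := forall v, peval v f = true.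

Fixpoint subst (s : P -> form) (f : form) : form :=
  match f with
  | Top => Top
  | Var p => s p
  | Neg g => Neg (subst s g)
  | And g h => And (subst s g) (subst s h)
  | Box i g => Box i (subst s g)
  end.

Definition normal_logic (L : form -> Prop) : Prop :=
  (forall f, tautology f -> L f) /\
  (forall i a b, L (Imp (Box i (Imp a b)) (Imp (Box i a) (Box i b)))) /\
  (forall a b, L (Imp a b) -> L a -> L b) /\
  (forall i a, L a -> L (Box i a)) /\
  (forall s a, L a -> L (subst s a)).

Definition sound_wrt (L : form -> Prop) (X : pointed -> Prop) : Prop :=
  forall f, L f -> forall x, X x -> psat x f.

Definition consistent (L : form -> Prop) (A : form -> Prop) : Prop :=
  ~ exists l : list form, (forall a, In a l -> A a) /\ L (Neg (conj_list l)).

Definition finite_set (A : form -> Prop) : Prop :=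
  exists l : list form, forall a, A a <-> In a l.

Definition compact_logic (L : form -> Prop) : Prop :=
  forall A : form -> Prop,
    consistent L A <->
    (forall B : form -> Prop, (forall b, B b -> A b) -> finite_set B -> consistent L B).

(** Equivalence classes [phi] of L-provably equivalent formulas; the
    elements of bold-L_L. A descriptor is a set of such classes. *)
Definition eqclass (L : form -> Prop) (f : form) : form -> Prop :=
  fun g => L (Iff f g).

Definition is_descriptor (L : form -> Prop) (D : (form -> Prop) -> Prop) : Prop :=
  forall c, D c -> exists f, c = eqclass L f.

Definition xD (L : form -> Prop) (X : pointed -> Prop)
  (D : (form -> Prop) -> Prop) (x : pointed) : pointed -> Prop :=
  fun y => X y /\ forall f, D (eqclass L f) -> (psat y f <-> psat x f).

Definition XD (L : form -> Prop) (X : pointed -> Prop)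
  (D : (form -> Prop) -> Prop) : (pointed -> Prop) -> Prop :=
  fun S => exists x, X x /\ S = xD L X D x.

Definition subbasis_D (L : form -> Prop) (X : pointed -> Prop)
  (D : (form -> Prop) -> Prop)
  : ((pointed -> Prop) -> Prop) -> Prop :=
  fun U => exists f, D (eqclass L f) /\
    (U = (fun S => exists x, X x /\ S = xD L X D x /\ psat x f) \/
     U = (fun S => exists x, X x /\ S = xD L X D x /\ psat x (Neg f))).

End Lang.

Arguments Imp {P I}. Arguments Iff {P I}. Arguments conj_list {P I}.
Arguments sat {P I}. Arguments psat {P I}. Arguments peval {P I}.
Arguments tautology {P I}. Arguments subst {P I}. Arguments normal_logic {P I}.
Arguments sound_wrt {P I}. Arguments consistent {P I}. Arguments finite_set {P I}.
Arguments compact_logic {P I}. Arguments eqclass {P I}. Arguments is_descriptor {P I}.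
Arguments xD {P I}. Arguments XD {P I}. Arguments subbasis_D {P I}.
Arguments world {P I}. Arguments rel {P I}. Arguments val {P I}.
Arguments pmodel {P I}. Arguments pworld {P I}.

Definition generated_open {T : Type} (space : T -> Prop)
  (sub : (T -> Prop) -> Prop) (U : T -> Prop) : Prop :=
  (forall t, U t -> space t) /\
  forall t, U t -> exists l : list (T -> Prop),
    (forall B, In B l -> sub B) /\ (forall B, In B l -> B t) /\
    (forall s, space s -> (forall B, In B l -> B s) -> U s).

Definition compact_space {T : Type} (space : T -> Prop)
  (sub : (T -> Prop) -> Prop) : Prop :=
  forall F : (T -> Prop) -> Prop,
    (forall U, F U -> generated_open space sub U) ->
    (forall t, space t -> exists U, F U /\ U t) ->
    exists l : list (T -> Prop),
      (forall U, In U l -> F U) /\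
      (forall t, space t -> exists U, In U l /\ U t).

Definition saturated {P I : Type} (L : form P I -> Prop) (X : pointed P I -> Prop)
  (D : (form P I -> Prop) -> Prop) : Prop :=
  forall Y Y' : (form P I -> Prop) -> Prop,
    (forall c, Y c -> D c) -> (forall c, Y' c -> D c) ->
    let B := fun g => (exists c, Y c /\ c g) \/
                      (exists f, (exists c, Y' c /\ c f) /\ g = Neg f) in
    consistent L B -> exists x, X x /\ forall g, B g -> psat x g.

(* Main.v *)
Require Import Defs.
From Stdlib Require Import List Arith Lia Classical ClassicalEpsilon Cantor.
Import ListNotations.

Section Enc.
Variables P I : Type.
Variable fP : P -> nat.
Variable fI : I -> nat.
Hypothesis fPi : forall x y, fP x = fP y -> x = y.
Hypothesis fIi : forall x y, fI x = fI y -> x = y.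

Definition pr (a b : nat) := Cantor.to_nat (a, b).
Lemma pr_inj a b c d : pr a b = pr c d -> a = c /\ b = d.
Proof.
  intro H. assert (H' := f_equal Cantor.of_nat H). unfold pr in H'.
  rewrite !Cantor.cancel_of_to in H'. inversion H'; auto.
Qed.

Fixpoint enc (f : form P I) : nat :=
  match f with
  | Top => pr 0 0
  | Var p => pr 1 (fP p)
  | Neg g => pr 2 (enc g)
  | And g h => pr 3 (pr (enc g) (enc h))
  | Box i g => pr 4 (pr (fI i) (enc g))
  end.

Lemma enc_inj : forall f g, enc f = enc g -> f = g.
Proof.
  induction f; destruct g; simpl; intro H;
  repeat match goal with
  | H : pr _ _ = pr _ _ |- _ => apply pr_inj in H; destruct H
  end; try discriminate; try reflexivity.
  - f_equal; auto.
  - f_equal; auto.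
  - f_equal; auto.
  - f_equal; auto.
Qed.
End Enc.

Lemma psat_iff {P I} (y : pointed P I) f g :
  psat y (Iff f g) -> (psat y f <-> psat y g).
Proof.
  unfold psat, Iff, Imp; simpl. intros [H1 H2]. split; intro H.
  - apply NNPP; intro; apply H1; auto.
  - apply NNPP; intro; apply H2; auto.
Qed.

Lemma psat_conj {P I} (y : pointed P I) l :
  (forall g, In g l -> psat y g) -> psat y (conj_list l).
Proof.
  induction l; simpl; intros H. exact Logic.I.
  unfold psat in *; simpl. split. apply H; auto. apply IHl; auto.
Qed.

Theorem proposition22 (P I : Type)
  (cP : countable P) (iP : inhabited P) (cI : countable I) (iI : inhabited I)
  (X : pointed P I -> Prop) (L : form P I -> Prop)
  (HL : normal_logic L) (Hsound : sound_wrt L X) (Hcomp : compact_logic L)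
  (D : (form P I -> Prop) -> Prop) (HD : is_descriptor L D)
  (Hsat : saturated L X D) :
  compact_space (XD L X D) (subbasis_D L X D).
Proof.
  destruct cP as [fP fPi]. destruct cI as [fI fIi].
  set (e := enc P I fP fI).
  assert (einj : forall f g, e f = e g -> f = g) by (apply enc_inj; auto).
  intros F Fopen Fcov.
  apply NNPP; intro Hnot.
  set (C := fun (n : nat) (c : bool) (y : pointed P I) =>
    forall f, e f = n -> D (eqclass L f) -> (psat y f <-> c = true)).
  set (NFC := fun (S : pointed P I -> Prop) => ~ exists l,
     (forall U, In U l -> F U) /\
     forall y, S y -> exists U, In U l /\ U (xD L X D y)).
  set (dec := fun S n => if excluded_middle_informative
                  (NFC (fun y => S y /\ C n true y)) then true else false).
  set (S := fix S (n : nat) : pointed P I -> Prop :=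
     match n with
     | 0 => X
     | Datatypes.S m => fun y => S m y /\ C m (dec (S m) m) y
     end).
  set (b := fun n => dec (S n) n).
  assert (HSS : forall n y, S (Datatypes.S n) y <-> S n y /\ C n (b n) y)
    by (intros; simpl; tauto).
  assert (HCtf : forall n y, C n true y \/ C n false y).
  { intros n y.
    destruct (classic (exists f, e f = n /\ D (eqclass L f) /\ psat y f))
      as [[f [H1 [H2 H3]]]|Hn].
    - left. intros f' H1' H2'. assert (f' = f) by (apply einj; congruence).
      subst f'. tauto.
    - right. intros f' H1' H2'. split; intro H; [|discriminate].
      exfalso; apply Hn; eauto. }
  assert (Hinv : forall n, NFC (S n)).
  { induction n.
    - intros [l [Hl Hc]]. apply Hnot. exists l. split; auto.
      intros t [y [Hy ->]]. apply Hc. exact Hy.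
    - unfold NFC. intros [l [Hl Hc]].
      assert (Hb := HSS n). unfold b, dec in Hb.
      destruct (excluded_middle_informative
                  (NFC (fun y => S n y /\ C n true y))) as [H|H].
      + apply H. exists l. split; auto. intros y Hy. apply Hc, Hb. exact Hy.
      + apply NNPP in H. destruct H as [l1 [Hl1 Hc1]].
        apply IHn. exists (l1 ++ l). split.
        * intros U HU. apply in_app_or in HU. destruct HU; auto.
        * intros y Hy. destruct (HCtf n y) as [Ht|Hf].
          -- destruct (Hc1 y (conj Hy Ht)) as [U [HU1 HU2]].
             exists U; split; auto using in_or_app.
          -- destruct (Hc y (proj2 (Hb y) (conj Hy Hf))) as [U [HU1 HU2]].
             exists U; split; auto using in_or_app. }
  assert (Hmono : forall m n y, n <= m -> S m y -> S n y).
  { induction m; intros n y Hle Hy.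
    - assert (n = 0) by lia. subst; auto.
    - destruct (Nat.eq_dec n (Datatypes.S m)) as [->|Hne]; auto.
      apply IHm; [lia|]. apply (proj1 (HSS m y)) in Hy; tauto. }
  assert (HSX : forall n y, S n y -> X y).
  { intros n y Hy. apply (Hmono n 0 y); auto; lia. }
  assert (HSC : forall n k y, k < n -> S n y -> C k (b k) y).
  { intros n k y Hk Hy. apply (Hmono n (Datatypes.S k) y) in Hy; [|lia].
    apply (proj1 (HSS k y)) in Hy; tauto. }
  assert (Hne : forall n, exists y, S n y).
  { intros n. apply NNPP; intro H. apply (Hinv n). exists []. split.
    intros U []. intros y Hy; exfalso; eauto. }
  set (Y := fun c => D c /\ exists f, c = eqclass L f /\ b (e f) = true).
  set (Y' := fun c => D c /\ exists f, c = eqclass L f /\ b (e f) = false).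
  assert (Hsat' := Hsat Y Y' (fun c H => proj1 H) (fun c H => proj1 H)).
  simpl in Hsat'.
  destruct Hsat' as [x [Hx HB]].
  { intros [l [Hl HLl]].
    assert (HN : exists N, forall y, S N y -> forall g, In g l -> psat y g).
    { clear HLl. induction l as [|g l IH].
      - exists 0. intros y _ g [].
      - destruct IH as [N HN]. { intros a Ha; apply Hl; simpl; auto. }
        destruct (Hl g (or_introl eq_refl)) as
          [[c [[HDc [f [-> Hbf]]] Hfg]] | [h [[c [[HDc [f [-> Hbf]]] Hfh]] ->]]].
        + exists (Nat.max N (Datatypes.S (e f))). intros y Hy g' [<-|Hg'].
          * assert (Hc := HSC (Nat.max N (Datatypes.S (e f))) (e f) y ltac:(lia) Hy f eq_refl HDc).
            rewrite Hbf in Hc. apply (psat_iff y f g).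
            apply Hsound; auto. eapply HSX; eauto. tauto.
          * apply HN; auto. eapply Hmono; [|exact Hy]; lia.
        + exists (Nat.max N (Datatypes.S (e f))). intros y Hy g' [<-|Hg'].
          * assert (Hc := HSC (Nat.max N (Datatypes.S (e f))) (e f) y ltac:(lia) Hy f eq_refl HDc).
            rewrite Hbf in Hc.
            assert (Hi := psat_iff y f h (Hsound _ Hfh y (HSX _ _ Hy))).
            unfold psat; simpl. fold (psat y h). intro. 
            assert (false = true) by tauto. discriminate.
          * apply HN; auto. eapply Hmono; [|exact Hy]; lia. }
    destruct HN as [N HN]. destruct (Hne N) as [y Hy].
    assert (Hs := Hsound _ HLl y (HSX _ _ Hy)).
    apply Hs. apply psat_conj. apply HN; auto. }
  assert (Htaut : forall f, L (Iff f f)).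
  { intro f. apply (proj1 HL). intro v. simpl. destruct (peval v f); reflexivity. }
  assert (HxC : forall k, C k (b k) x).
  { intros k f Hk HDf. subst k. destruct (b (e f)) eqn:Hb.
    - split; auto. intros _. apply HB. left. exists (eqclass L f).
      split. split; auto. exists f; auto. apply Htaut.
    - split; [|discriminate]. intro Hf.
      assert (H := HB (Neg f)). unfold psat in H; simpl in H. exfalso; apply H; auto.
      right. exists f. split; auto. exists (eqclass L f). split.
      split; auto. exists f; auto. apply Htaut. }
  assert (HxS : forall n, S n x).
  { induction n; auto. apply HSS; auto. }
  destruct (Fcov (xD L X D x)) as [U [HFU HUx]].
  { exists x; auto. }
  destruct (Fopen U HFU) as [_ HUo].
  destruct (HUo _ HUx) as [lb [Hlb1 [Hlb2 Hlb3]]].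
  assert (Hxx : forall x', xD L X D x = xD L X D x' -> forall f, D (eqclass L f) ->
            (psat x f <-> psat x' f)).
  { intros x' Heq f HDf. assert (H : xD L X D x x).
    { split; auto. tauto. }
    rewrite Heq in H. destruct H as [_ H]. apply H; auto. }
  assert (HN : exists N, forall y, S N y -> forall B, In B lb -> B (xD L X D y)).
  { clear Hlb3. induction lb as [|B lb IH].
    - exists 0. intros y _ B [].
    - destruct IH as [N HN]; [intros; apply Hlb1; simpl; auto|
                              intros; apply Hlb2; simpl; auto|].
      destruct (Hlb1 B (or_introl eq_refl)) as [f [HDf [-> | ->]]].
      + exists (Nat.max N (Datatypes.S (e f))). intros y Hy B' [<-|HB'].
        * exists y. split; [eapply HSX; eauto|split; auto].
          destruct (Hlb2 _ (or_introl eq_refl)) as [x' [_ [Heq Hf]]].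
          apply (Hxx x' Heq f HDf) in Hf.
          assert (Hc1 := HSC (Nat.max N (Datatypes.S (e f))) (e f) y ltac:(lia) Hy f eq_refl HDf).
          assert (Hc2 := HxC (e f) f eq_refl HDf). tauto.
        * apply HN; auto. eapply Hmono; [|exact Hy]; lia.
      + exists (Nat.max N (Datatypes.S (e f))). intros y Hy B' [<-|HB'].
        * exists y. split; [eapply HSX; eauto|split; auto].
          destruct (Hlb2 _ (or_introl eq_refl)) as [x' [_ [Heq Hf]]].
          unfold psat in Hf |- *; simpl in Hf |- *. fold (psat x' f) in Hf.
          fold (psat y f). rewrite <- (Hxx x' Heq f HDf) in Hf.
          assert (Hc1 := HSC (Nat.max N (Datatypes.S (e f))) (e f) y ltac:(lia) Hy f eq_refl HDf).
          assert (Hc2 := HxC (e f) f eq_refl HDf). tauto.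
        * apply HN; auto. eapply Hmono; [|exact Hy]; lia. }
  destruct HN as [N HN].
  apply (Hinv N). exists [U]. split.
  - intros U' [<-|[]]; auto.
  - intros y Hy. exists U. split; [left; auto|].
    apply Hlb3. exists y; split; auto. eapply HSX; eauto.
    apply HN; auto.
Qed.
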